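(* Let $H$ be a real symmetric positive definite $d\times d$ matrix and $L$ a real $d\times d$ matrix with $L^TH+HL=0$. Let $s>4$ be even and consider the $s$-stage explicit Runge–Kutta method applied to $\frac{d}{dt}u=Lu$, $u_{n+1}=G_s u_n$ with $G_s=\sum_{k=0}^s a_k(hL)^k$, $a_0=1$, where $a_k=\frac{1}{k!}$ for $k=1,\dots,s-2$, $a_{s-1}=\frac{3}{(s+2)!}-\frac{3}{(s+1)!}+\frac{1}{(s-1)!}$, and $a_s=\frac{3}{(s+2)!}-\frac{3}{(s+1)!}+\frac{1}{s!}$. Then the method has order $p=s-2$ and order of energy accuracy $r=s+3$.
   Context: The order $p$ of the method is the largest integer such that $a_k=1/k!$ for all $1\le k\le p$. For $0\le k\le s$, $b_k=\sum_{i=\max(0,2k-s)}^{\min(2k,s)}(-1)^{k+i}a_i a_{2k-i}$, so that the energy $\mathcal{E}=\tfrac12\langle u,Hu\rangle$ satisfies $\mathcal{E}_{n+1}=\mathcal{E}_n+\tfrac12\sum_{k=1}^s b_k h^{2k}\|L^k u_n\|_H^2$. The leading index $m$ is the smallest $k\ge1$ with $b_k\ne0$ and the order of energy accuracy is $r=2m-1$. *)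

(* Defs.v *)
From mathcomp Require Import all_boot all_order all_algebra.
Set Implicit Arguments. Unset Strict Implicit. Unset Printing Implicit Defensive.
Import Order.TTheory GRing.Theory Num.Theory.
Local Open Scope ring_scope.

Definition rk_coef (R : realFieldType) (s k : nat) : R :=
  if k == 0%N then 1
  else if (k <= s - 2)%N then (k`!)%:R^-1
  else if k == s.-1 then 3 / (s.+2`!)%:R - 3 / (s.+1`!)%:R + (s.-1`!)%:R^-1
  else if k == s then 3 / (s.+2`!)%:R - 3 / (s.+1`!)%:R + (s`!)%:R^-1
  else 0.

(* p is the order: the largest integer p (0 <= p <= s) such that a_k = 1/k!
   for all 1 <= k <= p. *)
Definition is_order (R : realFieldType) (a : nat -> R) (s p : nat) : Prop :=
  [/\ (p <= s)%N,
      (forall k, (1 <= k <= p)%N -> a k = (k`!)%:R^-1)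
    & ((p < s)%N -> a p.+1 <> (p.+1`!)%:R^-1)].

Definition bcoef (R : realFieldType) (a : nat -> R) (s k : nat) : R :=
  \sum_(maxn 0 (k.*2 - s) <= i < (minn k.*2 s).+1)
     (-1) ^+ (k + i) * a i * a (k.*2 - i)%N.

Definition is_energy_accuracy (R : realFieldType) (a : nat -> R) (s r : nat) : Prop :=
  exists m : nat,
    [/\ (1 <= m <= s)%N, bcoef a s m <> 0,
        (forall k, (1 <= k < m)%N -> bcoef a s k = 0)
      & r = (m.*2 - 1)%N].

(* Main.v *)
Require Import Defs.
From mathcomp Require Import all_boot all_order all_algebra.
From mathcomp Require Import ring lra zify.
Set Implicit Arguments. Unset Strict Implicit. Unset Printing Implicit Defensive.
Import Order.TTheory GRing.Theory Num.Theory.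
Local Open Scope ring_scope.

Lemma natfact_neq0 (R : realFieldType) n : (n`!)%:R != 0 :> R.
Proof. by rewrite pnatr_eq0 -lt0n fact_gt0. Qed.

Lemma Fzero (R : realFieldType) N : (0 < N)%N ->
  \sum_(0 <= i < N.+1) (-1) ^+ i * ((i`!)%:R^-1 * (((N - i)`!)%:R^-1)) = 0 :> R.
Proof.
move=> N0.
apply: (mulfI (natfact_neq0 R N)).
rewrite mulr0.
transitivity (((1:R) - 1) ^+ N); last by rewrite subrr expr0n gtn_eqF.
rewrite exprBn big_mkord mulr_sumr; apply: eq_bigr => i _.
rewrite !expr1n !mulr1 -[RHS]mulr_natr mulrCA; congr (_ * _).
have := bin_fact (ltnSE (ltn_ord i)) => /(congr1 (fun n => n%:R : R)).
rewrite !natrM => <-.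
by field; rewrite !natfact_neq0.
Qed.

Section P.
Variable R : realFieldType.
Variable s : nat.
Hypothesis s6 : (6 <= s)%N.

Definition cc : R := 3 / (s.+2`!)%:R - 3 / (s.+1`!)%:R.

Lemma a_ex i : (i <= s - 2)%N -> rk_coef R s i = (i`!)%:R^-1.
Proof. by rewrite /rk_coef; case: eqP => [->|_ ->] //; rewrite fact0 invr1. Qed.

Lemma a_out i : (s < i)%N -> rk_coef R s i = 0.
Proof.
move=> H; rewrite /rk_coef.
case: eqP => [?|_]; first lia.
case: ifP => [?|_]; first lia.
case: eqP => [?|_]; first lia.
case: eqP => [?|_]; first lia.
done.
Qed.

Lemma a_sm1 : rk_coef R s s.-1 = (s.-1`!)%:R^-1 + cc.
Proof.
rewrite /rk_coef /cc.
case: eqP => [?|_]; first lia.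
case: ifP => [?|_]; first lia.
rewrite eqxx; ring.
Qed.

Lemma a_s : rk_coef R s s = (s`!)%:R^-1 + cc.
Proof.
rewrite /rk_coef /cc.
case: eqP => [?|_]; first lia.
case: ifP => [?|_]; first lia.
case: eqP => [?|_]; first lia.
rewrite eqxx; ring.
Qed.
Hypothesis se : ~~ odd s.

Definition SS N : R := \sum_(0 <= i < N.+1) (-1) ^+ i * rk_coef R s i * rk_coef R s (N - i).

Lemma bcoef_S k : (k <= s)%N -> bcoef (rk_coef R s) s k = (-1) ^+ k * SS k.*2.
Proof.
move=> ks; have d2 := addnn k; rewrite /bcoef /SS max0n mulr_sumr.
rewrite [RHS](big_cat_nat _ (n := k.*2 - s)) //=; last by lia.
rewrite [X in _ + X](big_cat_nat _ (n := (minn k.*2 s).+1)) /=; [|lia|lia].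
rewrite [X in X + _]big_nat_cond [X in X + _]big1; last first.
  move=> i /andP[/andP[H1 H2] _]; rewrite (a_out (i := (k.*2 - i)%N)); [by rewrite !mulr0|lia].
rewrite [X in _ + (_ + X)]big_nat_cond [X in _ + (_ + X)]big1; last first.
  move=> i /andP[/andP[H1 H2] _]; rewrite (a_out (i := i)); [by rewrite !(mulr0, mul0r)|lia].
rewrite add0r addr0; apply: eq_big_nat => i _; rewrite exprD; ring.
Qed.

Definition hh N i : R := (-1) ^+ i * (rk_coef R s i * rk_coef R s (N - i) - (i`!)%:R^-1 * (((N - i)`!)%:R^-1)).
Lemma s0 : (0 < s)%N. Proof. lia. Qed.

Lemma SS_h N : (0 < N)%N -> SS N = \sum_(0 <= i < N.+1) hh N i.
Proof.
move=> N0; rewrite /SS -[LHS]subr0 -[X in _ - X](Fzero R N0) -sumrB.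
by apply: eq_bigr => i _; rewrite /hh; ring.
Qed.

Lemma sum2 m n (F : nat -> R) : n = m.+2 -> \sum_(m <= i < n) F i = F m + F m.+1.
Proof. by move->; rewrite big_ltn // big_ltn // big_geq // addr0. Qed.

Lemma sum4 m n (F : nat -> R) : n = m.+4 ->
  \sum_(m <= i < n) F i = F m + F m.+1 + F m.+2 + F m.+3.
Proof.
move->; rewrite (big_cat_nat _ (n := m.+2)) /=; [|lia|lia].
by rewrite (sum2 _ (m := m)) // (sum2 _ (m := m.+2)) // !addrA.
Qed.

Lemma sgn_s : (-1) ^+ s = 1 :> R.
Proof. by rewrite -signr_odd (negbTE se). Qed.

Lemma sgn_sm1 : (-1) ^+ s.-1 = -1 :> R.
Proof.
rewrite -signr_odd; have := se; rewrite -(prednK s0) /= negbK => ->; by rewrite expr1.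
Qed.

Lemma hh0 N i : (i <= s - 2)%N -> (N - i <= s - 2)%N -> hh N i = 0.
Proof. by move=> H1 H2; rewrite /hh (a_ex H1) (a_ex H2) subrr mulr0. Qed.

Lemma zero_piece N m n : (forall i, (m <= i < n)%N -> (i <= s - 2)%N /\ (N - i <= s - 2)%N) ->
  \sum_(m <= i < n) hh N i = 0.
Proof.
move=> H; rewrite big_nat_cond big1 // => i /andP[Hi _].
by case: (H i Hi) => ??; apply: hh0.
Qed.

Lemma L1 N : (0 < N)%N -> (N <= s - 2)%N -> SS N = 0.
Proof. move=> N0 Ns; rewrite SS_h // zero_piece // => i Hi; lia. Qed.

Lemma L2 : SS s = 0.
Proof.
rewrite SS_h ?s0 //.
rewrite (big_cat_nat _ (n := 2)) //=; last lia.
rewrite [X in _ + X](big_cat_nat _ (n := s.-1)) //=; [|lia|lia].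
rewrite (sum2 _ (m := 0)) // (sum2 _ (m := s.-1)); last by rewrite prednK ?s0.
rewrite zero_piece; last by move=> i /andP[? ?]; lia.
rewrite prednK ?s0 //.
rewrite /hh subn0 subn1 subnn.
have -> : (s - s.-1 = 1)%N by lia.
rewrite a_s a_sm1 (a_ex (i := 0)) ?(a_ex (i := 1)); [|lia|lia].
rewrite sgn_s sgn_sm1 fact0.
rewrite (factS 0) fact0 invr1; ring.
Qed.
Lemma sgnS n : (-1) ^+ n.+1 = - (-1) ^+ n :> R.
Proof. by rewrite exprS mulN1r. Qed.

Lemma L3 : SS s.+2 = 0.
Proof.
rewrite SS_h //.
rewrite (big_cat_nat _ (n := 2)) /=; [|lia|lia].
rewrite [X in _ + X](big_cat_nat _ (n := 4)) /=; [|lia|lia].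
rewrite [X in _ + (_ + X)](big_cat_nat _ (n := s.-1)) /=; [|lia|lia].
rewrite [X in _ + (_ + (_ + X))](big_cat_nat _ (n := s.+1)) /=; [|lia|lia].
rewrite (sum2 _ (m := 0)) // (sum2 _ (m := 2)) // (sum2 _ (m := s.+1)) //.
rewrite (sum2 _ (m := s.-1)); last by rewrite prednK ?s0.
rewrite zero_piece; last by move=> i /andP[? ?]; lia.
rewrite prednK ?s0 // /hh.
have -> : (s.+2 - 0 = s.+2)%N by lia.
have -> : (s.+2 - 1 = s.+1)%N by lia.
have -> : (s.+2 - 2 = s)%N by lia.
have -> : (s.+2 - 3 = s.-1)%N by lia.
have -> : (s.+2 - s.-1 = 3)%N by lia.
have -> : (s.+2 - s = 2)%N by lia.
have -> : (s.+2 - s.+1 = 1)%N by lia.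
have -> : (s.+2 - s.+2 = 0)%N by lia.
rewrite a_s a_sm1 !(a_out (i := s.+1)) // !(a_out (i := s.+2)) //.
rewrite (a_ex (i := 0)) ?(a_ex (i := 1)) ?(a_ex (i := 2)) ?(a_ex (i := 3)); try lia.
rewrite !sgnS sgn_s sgn_sm1.
have f2 : (2`!)%N = 2%N by []. have f3 : (3`!)%N = 6%N by []. have f1 : (1`!)%N = 1%N by []. rewrite f2 f3 f1 fact0.
rewrite /cc.
field; rewrite ?natfact_neq0 ?pnatr_eq0 //.
Qed.
Lemma L4 : (8 <= s)%N -> SS s.+4 != 0.
Proof.
move=> s8.
rewrite SS_h //.
rewrite (big_cat_nat _ (n := 4)) /=; [|lia|lia].
rewrite [X in _ + X](big_cat_nat _ (n := 6)) /=; [|lia|lia].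
rewrite [X in _ + (_ + X)](big_cat_nat _ (n := s.-1)) /=; [|lia|lia].
rewrite [X in _ + (_ + (_ + X))](big_cat_nat _ (n := s.+1)) /=; [|lia|lia].
rewrite (sum4 _ (m := 0)) // (sum2 _ (m := 4)) // (sum4 _ (m := s.+1)) //.
rewrite (sum2 _ (m := s.-1)); last by rewrite prednK ?s0.
rewrite zero_piece; last by move=> i /andP[? ?]; lia.
rewrite prednK ?s0 // /hh.
have -> : (s.+4 - 0 = s.+4)%N by lia.
have -> : (s.+4 - 1 = s.+3)%N by lia.
have -> : (s.+4 - 2 = s.+2)%N by lia.
have -> : (s.+4 - 3 = s.+1)%N by lia.
have -> : (s.+4 - 4 = s)%N by lia.
have -> : (s.+4 - 5 = s.-1)%N by lia.
have -> : (s.+4 - s.-1 = 5)%N by lia.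
have -> : (s.+4 - s = 4)%N by lia.
have -> : (s.+4 - s.+1 = 3)%N by lia.
have -> : (s.+4 - s.+2 = 2)%N by lia.
have -> : (s.+4 - s.+3 = 1)%N by lia.
have -> : (s.+4 - s.+4 = 0)%N by lia.
rewrite a_s a_sm1 (a_out (i := s.+1)); last lia.
rewrite (a_out (i := s.+2)); last lia.
rewrite (a_out (i := s.+3)); last lia.
rewrite (a_out (i := s.+4)); last lia.
rewrite (a_ex (i := 0)) ?(a_ex (i := 1)) ?(a_ex (i := 2)) ?(a_ex (i := 3)) ?(a_ex (i := 4)) ?(a_ex (i := 5)); try lia.
rewrite !sgnS sgn_s sgn_sm1.
have f2 : (2`!)%N = 2%N by []. have f3 : (3`!)%N = 6%N by []. have f1 : (1`!)%N = 1%N by [].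
have f4 : (4`!)%N = 24%N by []. have f5 : (5`!)%N = 120%N by [].
rewrite f2 f3 f1 f4 f5 fact0 /cc.
have e1 : (s.+1`!)%:R = (s%:R + 1) * (s`!)%:R :> R by rewrite factS natrM mulrS addrC.
have e2 : (s.+2`!)%:R = (s%:R + 2) * (s%:R + 1) * (s`!)%:R :> R by rewrite factS natrM e1 !mulrS; ring.
have e3 : (s.+3`!)%:R = (s%:R + 3) * (s%:R + 2) * (s%:R + 1) * (s`!)%:R :> R by rewrite factS natrM e2 !mulrS; ring.
have e4 : (s.+4`!)%:R = (s%:R + 4) * (s%:R + 3) * (s%:R + 2) * (s%:R + 1) * (s`!)%:R :> R by rewrite factS natrM e3 !mulrS; ring.
rewrite e4 e3 e2 e1.
have x8 : 8 <= s%:R :> R by rewrite ler_nat.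
have X0 : (s`!)%:R != 0 :> R by apply: natfact_neq0.
have Y0 : (s.-1`!)%:R != 0 :> R by apply: natfact_neq0.
have key : forall E : R, E = (2 * (s%:R + 3) * (s%:R + 4) * (s%:R - 4) + 30 * s%:R + 90) / (15 * ((s%:R+1)*(s%:R+2)*(s%:R+3)*(s%:R+4)) * (s`!)%:R) -> E != 0.
  move=> E ->; apply: mulf_neq0.
    apply: lt0r_neq0.
    have h1 : 0 <= 2 * (s%:R + 3) * (s%:R + 4) * (s%:R - 4) :> R.
      by rewrite !mulr_ge0 //; lra.
    lra.
  rewrite invr_eq0 !mulf_neq0 //; try (apply: lt0r_neq0; lra).
have p1 : s%:R + 1 != 0 :> R by apply: lt0r_neq0; lra.
have p2 : s%:R + 2 != 0 :> R by apply: lt0r_neq0; lra.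
have p3 : s%:R + 3 != 0 :> R by apply: lt0r_neq0; lra.
have p4 : s%:R + 4 != 0 :> R by apply: lt0r_neq0; lra.
apply: key.
field.
by rewrite X0 Y0 p1 p2 p3 p4.
Qed.
End P.

Lemma L6 (R : realFieldType) : SS R 6 10 != 0.
Proof.
rewrite /SS big_mkord !big_ord_recr big_ord0 /=.
rewrite /rk_coef /=.
have -> : ((10 - 6)`!)%N = 24%N by [].
have -> : (5`!)%N = 120%N by [].
have -> : (6`!)%N = 720%N by [].
have -> : (7`!)%N = (7 * 720)%N by [].
have -> : (8`!)%N = (8 * 7 * 720)%N by [].
rewrite !natrM.
apply/eqP => H.
have : (5 / (27 * 128 * 128) : R) = 0 by rewrite -H; field.
apply/eqP; rewrite !mulf_eq0 !invr_eq0 !mulf_eq0 !pnatr_eq0.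
by [].
Qed.

Theorem proposition4 (R : realFieldType) (s : nat) :
  (4 < s)%N -> ~~ odd s ->
  is_order (rk_coef R s) s (s - 2) /\ is_energy_accuracy (rk_coef R s) s (s + 3).
Proof.
move=> s4 se.
have hs := odd_double_half s; rewrite (negbTE se) add0n in hs.
set n := s./2 in hs.
have d2 := addnn n.
have s6 : (6 <= s)%N by lia.
split.
  split; first lia.
    by move=> k /andP[_ hk]; rewrite a_ex.
  move=> _; have -> : (s - 2).+1 = s.-1 by lia.
  rewrite a_sm1 //; move/eqP; rewrite -subr_eq0 addrC addKr /cc subr_eq0.
  move/eqP => E.
  have : ((s.+2)`!)%:R^-1 = ((s.+1)`!)%:R^-1 :> R.
    by apply: (mulfI (_ : (3:R) != 0)); [rewrite pnatr_eq0 | exact: E].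
  move/invr_inj/eqP; rewrite eqr_nat factS -{2}[(s.+1)`!]mul1n eqn_pmul2r ?fact_gt0 //.
exists n.+2; split.
- lia.
- rewrite bcoef_S //; last lia.
  apply/eqP; apply: mulf_neq0; first by rewrite signr_eq0.
  have -> : (n.+2).*2 = s.+4 by lia.
  have [->|s8] : s = 6 \/ (8 <= s)%N by lia.
    exact: L6.
  exact: L4.
- move=> k /andP[k1 k2]; rewrite bcoef_S //; last lia.
  have [h|[h|h]] : (k.*2 <= s - 2)%N \/ k.*2 = s \/ k.*2 = s.+2 by lia.
  + by rewrite L1 ?mulr0 //; lia.
  + by rewrite h L2 ?mulr0.
  + by rewrite h L3 ?mulr0.
- lia.
Qed.
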